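(* Let $\Lambda$ be an artin algebra, and let $f: X\to Y$ and $f': X'\to Y$ be epimorphisms of $\Lambda$-modules with isomorphic kernels. If there is $h: X\to X'$ with $f=f'h$, then $X'$ is a Riedtmann–Zwara degeneration of $X$.
   Context: Modules are finite length left $\Lambda$-modules. A module $M'$ is a Riedtmann–Zwara degeneration of $M$ if there exist a module $K$ and an exact sequence $0\to K\to K\oplus M\to M'\to 0$. *)

(* Defs.v *)
From HB Require Import structures.
From mathcomp Require Import all_boot all_order all_algebra.
Set Implicit Arguments. Unset Strict Implicit. Unset Printing Implicit Defensive.
Import GRing.Theory.
Local Open Scope ring_scope.

Definition is_ideal (R : comNzRingType) (I : R -> Prop) : Prop :=
  I 0 /\ (forall x y, I x -> I y -> I (x + y)) /\ (forall a x, I x -> I (a * x)).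

Definition artinian_ring (R : comNzRingType) : Prop :=
  forall I : nat -> R -> Prop,
    (forall n, is_ideal (I n)) ->
    (forall n x, I n.+1 x -> I n x) ->
    exists N, forall n, (N <= n)%N -> forall x, I n x <-> I N x.

Definition fg_over (R : comNzRingType) (L : algType R) : Prop :=
  exists s : seq L, forall l : L,
    exists c : seq R, size c = size s /\
      l = \sum_(i < size s) c`_i *: s`_i.

Definition artin_algebra (R : comNzRingType) (L : algType R) : Prop :=
  artinian_ring R /\ fg_over L.

Section Modules.
Variable (L : nzRingType).

Definition submodule (M : lmodType L) (S : M -> Prop) : Prop :=
  S 0 /\ forall (a : L) (x y : M), S x -> S y -> S (a *: x + y).

(* S is a maximal proper submodule of T, i.e. T/S is simple. *)
Definition simple_step (M : lmodType L) (S T : M -> Prop) : Prop :=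
  (forall x, S x -> T x) /\ (exists x, T x /\ ~ S x) /\
  forall U : M -> Prop, submodule U ->
    (forall x, S x -> U x) -> (forall x, U x -> T x) ->
    (forall x, U x <-> S x) \/ (forall x, U x <-> T x).

Definition composition_series (M : lmodType L) (n : nat) (C : nat -> M -> Prop)
  : Prop :=
  (forall i, submodule (C i)) /\
  (forall x, C 0%N x <-> x = 0) /\
  (forall x, C n x) /\
  (forall i, (i < n)%N -> simple_step (C i) (C i.+1)).

Definition finite_length (M : lmodType L) : Prop :=
  exists n C, @composition_series M n C.

(* Kernels of f and f' are isomorphic: a map phi restricting to a
   module isomorphism ker f -> ker f'. *)
Definition kernels_isomorphic (X X' Y : lmodType L)
  (f : X -> Y) (f' : X' -> Y) : Prop :=
  exists phi : X -> X',
    [/\ forall x, f x = 0 -> f' (phi x) = 0,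
        forall a x y, f x = 0 -> f y = 0 -> phi (a *: x + y) = a *: phi x + phi y,
        forall x y, f x = 0 -> f y = 0 -> phi x = phi y -> x = y &
        forall x', f' x' = 0 -> exists x, f x = 0 /\ phi x = x'].

Definition epimorphism (X Y : lmodType L) (f : X -> Y) : Prop :=
  forall y, exists x, f x = y.

Definition RZ_degeneration (M M' : lmodType L) : Prop :=
  exists K : lmodType L, finite_length K /\
    exists (i : {linear K -> (K * M)%type}) (p : {linear (K * M)%type -> M'}),
      [/\ injective i, epimorphism p &
          forall z, p z = 0 <-> exists k, i k = z].

End Modules.

(* Main.v *)
Require Import Defs.
From HB Require Import structures.
From mathcomp Require Import all_boot all_order all_algebra.
From Stdlib Require Import Classical.
Import GRing.Theory.
Set Implicit Arguments. Unset Strict Implicit.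
Local Open Scope ring_scope.

Lemma simple_step_ext (L : nzRingType) (M : lmodType L) (S S' T : M -> Prop) :
  (forall x, S x <-> S' x) -> simple_step S T -> simple_step S' T.
Proof.
move=> E [h1 [[x [Tx nSx]] h3]]; split; first by move=> y /E; apply: h1.
split; first by exists x; split=> // /E.
move=> U sU HS HT; have [H|H] := h3 U sU (fun y Sy => HS y (proj1 (E y) Sy)) HT.
  by left=> y; rewrite H E.
by right.
Qed.

Lemma chain_series (L : nzRingType) (K : lmodType L) (D : nat -> K -> Prop) n :
  (forall i, submodule (D i)) -> (forall x, D 0%N x <-> x = 0) ->
  (forall i, (i < n)%N -> (forall x, D i x <-> D i.+1 x) \/ simple_step (D i) (D i.+1)) ->
  exists m (C : nat -> K -> Prop), (forall i, submodule (C i)) /\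
    (forall x, C 0%N x <-> x = 0) /\ (forall x, C m x <-> D n x) /\
    (forall i, (i < m)%N -> simple_step (C i) (C i.+1)).
Proof.
move=> sD D0; elim: n => [|n IH] Hs.
  by exists 0%N, D; split=> //; split=> //; split=> //.
have [m [C [sC [C0 [Cm CS]]]]] := IH (fun i Hi => Hs i (ltnW Hi)).
have [E|S] := Hs n (ltnSn n).
  by exists m, C; do 3 (split=> //); move=> x; rewrite Cm E.
exists m.+1, (fun i => if (i <= m)%N then C i else D n.+1).
split; first by move=> i; case: ifP.
split; first by [].
split; first by move=> x; rewrite ltnn.
move=> i; rewrite ltnS => le_im; cbv beta; case: (ltnP i m) => [lt_im|ge_im].
  by rewrite (ltnW lt_im); apply: CS.
have -> : i = m by apply/eqP; rewrite eqn_leq le_im ge_im.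
rewrite leqnn; apply: simple_step_ext S => x; by rewrite Cm.
Qed.

Lemma sub_finite_length (L : nzRingType) (K X : lmodType L) (g : K -> X) :
  (forall a u v, g (a *: u + v) = a *: g u + g v) ->
  (forall u, g u = 0 -> u = 0) ->
  finite_length X -> finite_length K.
Proof.
move=> Hg inj [n [C [sC [C0 [Cn CS]]]]].
have g0 : g 0 = 0.
  by have := Hg (-1) 0 0; rewrite scaler0 addr0 => ->; rewrite scaleN1r addNr.
have gB : forall u k, g ((-1) *: u + k) = g k - g u.
  by move=> u k; rewrite Hg scaleN1r addrC.
have subC : forall i x y, C i x -> C i y -> C i (x + y).
  by move=> i x y Hx Hy; have := (proj2 (sC i)) 1 x y Hx Hy; rewrite scale1r.
pose D i k := C i (g k).
have sD : forall i, submodule (D i).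
  move=> i; split; first by rewrite /D g0; exact: (proj1 (sC i)).
  by move=> a x y; rewrite /D Hg; apply: (proj2 (sC i)).
have D0 : forall x, D 0%N x <-> x = 0.
  by move=> x; rewrite /D C0; split=> [/inj|->//].
suff Hst : forall i, (i < n)%N -> (forall x, D i x <-> D i.+1 x) \/ simple_step (D i) (D i.+1).
  have [m [C' [sC' [C'0 [C'm C'S]]]]] := @chain_series L K D n sD D0 Hst.
  by exists m, C'; split=> //; split=> //; split=> // x; apply/C'm; apply: Cn.
move=> i lt_in; have [Cle [_ Cmax]] := CS i lt_in.
have DleD : forall k, D i k -> D i.+1 k by move=> k; apply: Cle.
case: (classic (exists k, D i.+1 k /\ ~ D i k)) => [[k [Hk1 Hk2]]|NE]; last first.
  left=> k; split; first exact: DleD.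
  by move=> Hk; apply: NNPP => Hn; apply: NE; exists k.
right; split=> //; split; first by exists k.
move=> U sU HS HT.
pose V x := exists u c, U u /\ C i c /\ x = g u + c.
have sV : submodule V.
  split; first by exists 0, 0; split; [exact: (proj1 sU)|split; [exact: (proj1 (sC i))|rewrite g0 addr0]].
  move=> a x y [u1 [c1 [U1 [C1 ->]]]] [u2 [c2 [U2 [C2 ->]]]].
  exists (a *: u1 + u2), (a *: c1 + c2); split; first exact: (proj2 sU).
  split; first exact: (proj2 (sC i)).
  by rewrite Hg scalerDr -!addrA; congr (_ + _); rewrite addrCA.
have CV : forall x, C i x -> V x.
  by move=> x Cx; exists 0, x; split; [exact: (proj1 sU)|split=> //; rewrite g0 add0r].
have VC : forall x, V x -> C i.+1 x.
  move=> x [u [c [Uu [Cc ->]]]]; apply: subC; first exact: HT.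
  exact: Cle.
have [E|E] := Cmax V sV CV VC.
  left=> u; split; last exact: HS.
  by move=> Uu; apply/E; exists u, 0; split=> //; split; [exact: (proj1 (sC i))|rewrite addr0].
right=> u; split; first exact: HT.
move=> Du; have [u' [c [Uu' [Cc Eq]]]] : V (g u) by apply/E.
have Hd : D i ((-1) *: u' + u) by rewrite /D gB Eq addrC addKr.
have := (proj2 sU) 1 u' _ Uu' (HS _ Hd).
by rewrite scale1r addrA scaleN1r subrr add0r.
Qed.
Definition lfun (L : nzRingType) (U V : lmodType L) (g : U -> V) (H : linear g) : U -> V := g.
HB.instance Definition _ (L : nzRingType) (U V : lmodType L) (g : U -> V) (H : linear g) :=
  GRing.isLinear.Build L U V *:%R (@lfun L U V g H) H.

Definition kerp (L : nzRingType) (X Y : lmodType L) (f : {linear X -> Y}) : pred X :=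
  fun x => f x == 0.
Lemma kerp_closed (L : nzRingType) (X Y : lmodType L) (f : {linear X -> Y}) :
  GRing.subsemimod_closed (@kerp L X Y f).
Proof.
split; [split|].
- by rewrite -topredE /= /kerp raddf0.
- move=> u v; rewrite -!topredE /= /kerp raddfD => /eqP Hu /eqP Hv; apply/eqP; apply: eq_trans (addr0 0); congr (_ + _); [exact: Hu|exact: Hv].
- move=> a u; rewrite -!topredE /= /kerp linearZ => /eqP Hu; apply/eqP; apply: eq_trans (scaler0 _ a); congr (_ *: _); exact: Hu.
Qed.
Record kerT (L : nzRingType) (X Y : lmodType L) (f : {linear X -> Y}) :=
  KerT { kval : X; kvalP : kerp f kval }.
HB.instance Definition _ (L : nzRingType) (X Y : lmodType L) (f : {linear X -> Y}) :=
  [isSub for @kval L X Y f].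
HB.instance Definition _ (L : nzRingType) (X Y : lmodType L) (f : {linear X -> Y}) :=
  [Choice of @kerT L X Y f by <:].
HB.instance Definition _ (L : nzRingType) (X Y : lmodType L) (f : {linear X -> Y}) :=
  GRing.SubChoice_isSubLmodule.Build L X (@kerp L X Y f) (@kerT L X Y f) (@kerp_closed L X Y f).

Lemma kval_lin (L : nzRingType) (X Y : lmodType L) (f : {linear X -> Y}) a (u v : kerT f) :
  val (a *: u + v) = a *: val u + val v.
Proof. by rewrite linearP. Qed.

Lemma kval0 (L : nzRingType) (X Y : lmodType L) (f : {linear X -> Y}) (k : kerT f) :
  f (val k) = 0.
Proof. exact/eqP/(valP k). Qed.

Theorem proposition8p7 (R : comNzRingType) (Lam : algType R)
  (X X' Y : lmodType Lam)
  (f : {linear X -> Y}) (f' : {linear X' -> Y}) (h : {linear X -> X'}) :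
  artin_algebra Lam ->
  finite_length X -> finite_length X' -> finite_length Y ->
  epimorphism f -> epimorphism f' ->
  kernels_isomorphic f f' ->
  f =1 f' \o h ->
  RZ_degeneration X X'.
Proof.
move=> _ flX _ _ epif epif' [phi [phi0 philin phiinj phisurj]] fh.
have fP : forall a x y, f (a *: x + y) = a *: f x + f y by move=> *; exact: linearP.
have fN : forall x, f (- x) = - f x by move=> x; exact: raddfN.
have f'P : forall a x y, f' (a *: x + y) = a *: f' x + f' y by move=> *; exact: linearP.
have f'N : forall x, f' (- x) = - f' x by move=> x; exact: raddfN.
have hP : forall a x y, h (a *: x + y) = a *: h x + h y by move=> *; exact: linearP.
have hN : forall x, h (- x) = - h x by move=> x; exact: raddfN.
have hD : forall x y, h (x + y) = h x + h y by move=> x y; exact: raddfD.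
have f'D : forall x y, f' (x + y) = f' x + f' y by move=> x y; exact: raddfD.
have f'0 : f' 0 = 0 by exact: raddf0.
have fhE : forall x, f' (h x) = f x by move=> x; rewrite fh.
have Hex : forall x', exists x, (f' x' == 0) ==> ((f x == 0) && (phi x == x')).
  move=> x'; case E: (f' x' == 0); last by exists 0.
  by have [x [Hx1 Hx2]] := phisurj x' (eqP E); exists x; rewrite Hx1 Hx2 !eqxx.
pose psi (x' : X') : X := xchoose (Hex x').
have psiP : forall x', f' x' = 0 -> f (psi x') = 0 /\ phi (psi x') = x'.
  move=> x' E; have /implyP H := xchooseP (Hex x').
  by have /andP[/eqP H1 /eqP H2] := H (introT eqP E).
have f0 : f 0 = 0 by exact: raddf0.
have phi00 : phi 0 = 0.
  by have := philin (-1) 0 0 f0 f0; rewrite scaler0 addr0 scaleN1r addNr.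
have phiN : forall x, f x = 0 -> phi (- x) = - phi x.
  by move=> x Hx; have := philin (-1) x 0 Hx f0; rewrite addr0 phi00 addr0 !scaleN1r.
have psilin : forall a x' y', f' x' = 0 -> f' y' = 0 ->
    psi (a *: x' + y') = a *: psi x' + psi y'.
  move=> a x' y' Hx Hy.
  have Hxy : f' (a *: x' + y') = 0 by rewrite f'P Hx Hy scaler0 addr0.
  have [Px1 Px2] := psiP _ Hx; have [Py1 Py2] := psiP _ Hy; have [P1 P2] := psiP _ Hxy.
  apply: phiinj => //; first by rewrite fP Px1 Py1 scaler0 addr0.
  by rewrite P2 philin // Px2 Py2.
pose K := kerT f.
have inK : forall x, f x = 0 -> kerp f x by move=> x E; apply/eqP.
have hK : forall k : K, f' (h (val k)) = 0 by move=> k; rewrite fhE kval0.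
have mK : forall k : K, f (- psi (h (val k))) = 0.
  by move=> k; rewrite fN (proj1 (psiP _ (hK k))) oppr0.
pose ifun (k : K) : (K * X)%type := (insubd 0 (- psi (h (val k))), val k).
have ilin : linear ifun.
  move=> a k1 k2; rewrite /ifun /=.
  have -> : forall (u u' : K) (v v' : X), a *: (u, v) + (u', v') = (a *: u + u', a *: v + v') :> (K * X)%type by [].
  congr pair; apply: val_inj.
  rewrite kval_lin !insubdK; try exact: inK (mK _).
  - by rewrite hP psilin ?hK // scalerN opprD.
  - exact: (inK _ (mK (a *: k1 + k2))).
pose pfun (z : (K * X)%type) : X' := phi (val z.1) + h z.2.
have plin : linear pfun.
  move=> a [k1 x1] [k2 x2]; rewrite /pfun /=.
  rewrite philin ?kval0 // hP scalerDr addrACA //.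
exists K; split.
  apply: (@sub_finite_length _ K X val) => //.
  move=> u Hu; apply: (@val_inj _ _ K); rewrite Hu; symmetry; exact: raddf0.
exists (lfun ilin), (lfun plin); split.
- move=> k1 k2; rewrite /lfun /ifun => /(congr1 snd) /=; exact: val_inj.
- move=> x'; have [x Hx] := epif (f' x').
  have H0 : f' (x' - h x) = 0 by rewrite f'D f'N fhE Hx subrr.
  have [k0 [Hk0 Pk0]] := phisurj _ H0.
  have e : val (insubd 0 k0 : K) = k0 by apply: insubdK; apply/eqP; exact: Hk0.
  exists (insubd 0 k0, x); change (phi (val (insubd 0 k0 : K)) + h x = x'); by rewrite e Pk0 subrK.
- move=> [k x]; change (phi (val k) + h x = 0 <-> exists k0 : K, ifun k0 = (k, x)); rewrite /ifun; split.
  + move=> Hp.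
    have fx : f x = 0.
      by have := congr1 f' Hp; rewrite f'D f'0 fhE (phi0 _ (kval0 k)) add0r.
    have ex : val (insubd 0 x : K) = x by apply: insubdK; apply/eqP; exact: fx.
    have hx : f' (h x) = 0 by rewrite fhE.
    have [P1 P2] := psiP _ hx.
    have em : val (insubd 0 (- psi (h x)) : K) = - psi (h x).
      by apply: insubdK; apply/eqP; rewrite fN P1 oppr0.
    exists (insubd 0 x); rewrite ex; congr pair; apply: val_inj; rewrite em.
    apply: phiinj; [by rewrite fN P1 oppr0|exact: kval0|].
    rewrite (phiN _ P1) P2; apply/eqP; rewrite eq_sym -addr_eq0; exact/eqP.
  + move=> [k' E]; case: E => <- <-.
    have [P1 P2] := psiP _ (hK k').
    have em : val (insubd 0 (- psi (h (val k'))) : K) = - psi (h (val k')).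
      by apply: insubdK; apply/eqP; exact: mK.
    by rewrite em (phiN _ P1) P2 addNr.
Qed.
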